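(* Let $n\ge k\ge d$ be positive integers. Let $\mathcal{Z}_{n,k,d}\subseteq\mathbb{Q}^{n+d+k}$ be the set of points $(z_1,\dots,z_n;z_{n+1},\dots,z_{n+d};z_{n+d+1},\dots,z_{n+d+k})$ for which there exist an injective function $f:\{n+1,\dots,n+d\}\hookrightarrow\{n+d+1,\dots,n+d+k\}$ with $z_i=z_{f(i)}$ for all $n+1\le i\le n+d$, and a surjective function $g:\{1,\dots,n\}\twoheadrightarrow\{n+1,\dots,n+d\}$ with $z_j=z_{g(j)}$ for all $1\le j\le n$. Let $J^{\mathbb{Q},\mathbf{t}}_{n,k,d}\subseteq\mathbb{Q}[\mathbf{x}_n,\mathbf{y}_d,\mathbf{t}_k]$ be the ideal generated by \begin{itemize} \item $e_r(\mathbf{t}_k) - e_{r-1}(\mathbf{t}_k)h_1(\mathbf{y}_d)+\cdots+(-1)^r h_r(\mathbf{y}_d)$ for all $r>k-d$, \item $e_r(\mathbf{x}_n) - e_{r-1}(\mathbf{x}_n)h_1(\mathbf{y}_d)+\cdots+(-1)^r h_r(\mathbf{y}_d)$ for all $r>n-d$, \item $x_i^d - x_i^{d-1}e_1(\mathbf{y}_d)+\cdots+(-1)^d e_d(\mathbf{y}_d)$ for $i=1,\dots,n$. \end{itemize} Then $J^{\mathbb{Q},\mathbf{t}}_{n,k,d}\subseteq\mathbf{I}(\mathcal{Z}_{n,k,d})$.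
   Context: $\mathbb{Q}[\mathbf{x}_n,\mathbf{y}_d,\mathbf{t}_k]$, with $\mathbf{x}_n=(x_1,\dots,x_n)$, $\mathbf{y}_d=(y_1,\dots,y_d)$, $\mathbf{t}_k=(t_1,\dots,t_k)$, is the coordinate ring of $\mathbb{Q}^{n+d+k}$ (the coordinates in that order), and $\mathbf{I}(\mathcal{Z})$ denotes the ideal of polynomials vanishing on $\mathcal{Z}$. $e_r,h_r$ are elementary and complete homogeneous symmetric polynomials ($e_0=h_0=1$, $e_r=0$ when $r$ exceeds the number of variables). *)

(* Defs.v *)
From HB Require Import structures.
From mathcomp Require Import all_boot all_order all_algebra.
From mathcomp Require Import mpoly.

Import Order.TTheory GRing.Theory Num.Theory.
Local Open Scope ring_scope.

(* Elementary symmetric polynomial e_r of a finite family v : 'I_m -> R.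
   e_0 = 1 and e_r = 0 for r > m automatically. *)
Definition esymf (R : comNzRingType) (m : nat) (v : 'I_m -> R) (r : nat) : R :=
  \sum_(S : {set 'I_m} | #|S| == r) \prod_(i in S) v i.

Definition hsymf (R : comNzRingType) (m : nat) (v : 'I_m -> R) (r : nat) : R :=
  \sum_(a : {ffun 'I_m -> 'I_r.+1} | \sum_i (nat_of_ord (a i)) == r)
     \prod_i v i ^+ a i.

(* Variables of Q[x_n, y_d, t_k], coordinates in the order x, y, t. *)
Definition xidx (n d k : nat) (i : 'I_n) : 'I_(n + d + k) :=
  lshift k (lshift d i).
Definition yidx (n d k : nat) (j : 'I_d) : 'I_(n + d + k) :=
  lshift k (rshift n j).
Definition tidx (n d k : nat) (l : 'I_k) : 'I_(n + d + k) :=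
  rshift (n + d) l.

Definition xv (n d k : nat) (i : 'I_n) : {mpoly rat[n + d + k]} := 'X_(xidx n d k i).
Definition yv (n d k : nat) (j : 'I_d) : {mpoly rat[n + d + k]} := 'X_(yidx n d k j).
Definition tv (n d k : nat) (l : 'I_k) : {mpoly rat[n + d + k]} := 'X_(tidx n d k l).

Definition alt_eh (n d k m : nat) (v : 'I_m -> {mpoly rat[n + d + k]}) (r : nat)
  : {mpoly rat[n + d + k]} :=
  \sum_(j < r.+1) (-1) ^+ j * esymf _ m v (r - j) * hsymf _ d (yv n d k) j.

Definition alt_xe (n d k : nat) (i : 'I_n) : {mpoly rat[n + d + k]} :=
  \sum_(j < d.+1) (-1) ^+ j * xv n d k i ^+ (d - j) * esymf _ d (yv n d k) j.

Definition Jgens (n k d : nat) (p : {mpoly rat[n + d + k]}) : Prop :=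
  (exists2 r, (k - d < r)%N & p = alt_eh n d k k (tv n d k) r) \/
  (exists2 r, (n - d < r)%N & p = alt_eh n d k n (xv n d k) r) \/
  (exists i : 'I_n, p = alt_xe n d k i).

Definition ideal_gen (R : comNzRingType) (G : R -> Prop) (p : R) : Prop :=
  exists s : seq (R * R),
    (forall cg, cg \in s -> G cg.2) /\ p = \sum_(cg <- s) cg.1 * cg.2.

Definition J_Qt (n k d : nat) : {mpoly rat[n + d + k]} -> Prop :=
  ideal_gen _ (Jgens n k d).

Definition Zset (n k d : nat) (z : 'I_(n + d + k) -> rat) : Prop :=
  (exists f : 'I_d -> 'I_k, injective f /\
      forall i : 'I_d, z (yidx n d k i) = z (tidx n d k (f i))) /\
  (exists g : 'I_n -> 'I_d, (forall j : 'I_d, exists i : 'I_n, g i = j) /\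
      forall j : 'I_n, z (xidx n d k j) = z (yidx n d k (g j))).

Definition vanishing_ideal (N : nat) (Z : ('I_N -> rat) -> Prop)
  (p : {mpoly rat[N]}) : Prop :=
  forall z, Z z -> p.@[z] = 0.

(* Main.v *)
Require Import Defs.
From HB Require Import structures.
From mathcomp Require Import all_boot all_order all_algebra.
From mathcomp Require Import mpoly.
From mathcomp Require Import zify ring.
Local Open Scope ring_scope.
Import GRing.Theory.

Section Gen.
Variable R : comNzRingType.

Lemma prod_if (T : comNzRingType) (I : finType) (J : {set I}) (F G : I -> T) :
  \prod_i (if i \in J then F i else G i) = \prod_(i in J) F i * \prod_(i in ~: J) G i.
Proof.
rewrite (bigID (mem J)) /=; congr (_ * _); apply: eq_big => // i.
- by move=> ->.
- by rewrite inE.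
- by move/negbTE => ->.
Qed.

Lemma esym_coef (m : nat) (v : 'I_m -> R) r :
  (\prod_(i < m) (1 + (v i)%:P * 'X))`_r = esymf R m v r.
Proof.
have -> : \prod_(i < m) (1 + (v i)%:P * 'X) =
    \sum_(S : {set 'I_m}) (\prod_(i in S) v i) *: 'X^#|S|.
  rewrite (eq_bigr (fun i => (v i)%:P * 'X + 1)); last by move=> i _; rewrite addrC.
  rewrite bigA_distr; apply: eq_bigr => S _.
  rewrite prod_if (big1 _ (fun i => i \in ~: S)) // mulr1 big_split /=.
  by rewrite -rmorph_prod prodr_const mul_polyC.
by rewrite coef_sumMXn /esymf.
Qed.


Lemma hsym_coef d (w : 'I_d -> R) N j : (j <= N)%N ->
  (\prod_(i < d) \sum_(a < N.+1) (- ((w i)%:P * 'X)) ^+ a)`_j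
    = (-1) ^+ j * hsymf R d w j.
Proof.
move=> jN.
have E1 : forall (c : R) a, (- (c%:P * 'X)) ^+ a = ((-c) ^+ a) *: 'X^a.
  by move=> c a; rewrite -mul_polyC -mulNr -polyCN exprMn rmorphXn.
under eq_bigr do under eq_bigr do rewrite E1.
rewrite bigA_distr_bigA /=.
have E2 : forall f : {ffun 'I_d -> 'I_N.+1},
   \prod_i ((- w i) ^+ f i *: 'X^(f i)) =
   ((-1) ^+ (\sum_i (f i : nat)) * \prod_i w i ^+ f i) *: 'X^(\sum_i (f i : nat)).
  move=> f; under eq_bigr do rewrite -mul_polyC exprNn.
  rewrite big_split /= prodrXr -rmorph_prod big_split /= prodrXr.
  by rewrite mul_polyC.
under eq_bigr do rewrite E2.
rewrite coef_sumMXn.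
transitivity (\sum_(f : {ffun 'I_d -> 'I_N.+1} | \sum_i (f i : nat) == j)
   (-1) ^+ j * \prod_i w i ^+ f i).
  by apply: eq_big => // f /eqP ->.
rewrite -big_distrr /=; congr (_ * _).
have hjN : (j.+1 <= N.+1)%N by [].
pose wid (g : {ffun 'I_d -> 'I_j.+1}) : {ffun 'I_d -> 'I_N.+1} :=
  [ffun i => widen_ord hjN (g i)].
pose nar (f : {ffun 'I_d -> 'I_N.+1}) : {ffun 'I_d -> 'I_j.+1} :=
  [ffun i => inord (f i)].
rewrite /hsymf (reindex_onto wid nar).
  apply: eq_big => g.
    have -> : nar (wid g) == g.
      by apply/eqP/ffunP => i; rewrite !ffunE; apply/val_inj; rewrite /= inordK.
    rewrite andbT; congr (_ == _); apply: eq_bigr => i _; by rewrite ffunE.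
  by move=> _; apply: eq_bigr => i _; rewrite ffunE.
move=> f /eqP Hf; apply/ffunP => i; rewrite !ffunE; apply/val_inj => /=.
rewrite inordK // ltnS -Hf (bigD1 i) //= leq_addr //.
Qed.

Lemma EH_prod d (w : 'I_d -> R) N : exists q,
  \prod_(i < d) (1 + (w i)%:P * 'X) *
  \prod_(i < d) \sum_(a < N.+1) (- ((w i)%:P * 'X)) ^+ a = 1 + 'X^(N.+1) * q.
Proof.
rewrite -big_split /=.
apply: (big_ind (fun p => exists q, p = 1 + 'X^(N.+1) * q)).
- by exists 0; rewrite mulr0 addr0.
- move=> _ _ [a ->] [b ->]; exists (a + b + 'X^(N.+1) * a * b).
  ring.
- move=> i _; set y := - ((w i)%:P * 'X).
  have -> : 1 + (w i)%:P * 'X = 1 - y by rewrite /y opprK.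
  have H := subrXX 1 y N.+1; rewrite expr1n in H.
  have H2 : \sum_(a < N.+1) 1 ^+ (N.+1.-1 - a) * y ^+ a = \sum_(a < N.+1) y ^+ a.
    by apply: eq_bigr => a _; rewrite expr1n mul1r.
  rewrite H2 in H; rewrite -H; exists (- (- (w i)%:P) ^+ N.+1).
  by rewrite /y -mulNr exprMn mulrN mulrC.
Qed.


Lemma alt_vanish m d (v : 'I_m -> R) (w : 'I_d -> R) (f : 'I_d -> 'I_m) r :
  injective f -> (forall j, v (f j) = w j) -> (m - d < r)%N ->
  \sum_(j < r.+1) (-1) ^+ j * esymf R m v (r - j) * hsymf R d w j = 0.
Proof.
move=> injf hv hr.
pose Ev := \prod_(i < m) (1 + (v i)%:P * 'X).
pose Ew := \prod_(i < d) (1 + (w i)%:P * 'X).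
pose Hp := \prod_(i < d) \sum_(a < r.+1) (- ((w i)%:P * 'X)) ^+ a.
pose S := f @: [set: 'I_d].
pose Pu := \prod_(i in ~: S) (1 + (v i)%:P * 'X).
have hEv : Ev = Ew * Pu.
  rewrite /Ev (bigID (mem S)) /=; congr (_ * _).
    rewrite big_imset /=; last by move=> a b _ _; apply: injf.
    by apply: eq_big => [j|j _]; rewrite ?in_setT ?hv.
  by apply: eq_bigl => i; rewrite inE.
have cS : #|~: S| = (m - d)%N.
  have := cardsC S; rewrite card_imset // cardsT !card_ord; lia.
have hsz : (size Pu <= r)%N.
  apply: leq_trans (size_poly_prod_leq _ _) _.
  have : (\sum_(i in ~: S) size ((1 + (v i)%:P * 'X)%R) <= #|~: S| * 2)%N.
    rewrite -sum_nat_const; apply: leq_sum => i _.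
    apply/leq_sizeP => j hj; rewrite coefD coef1 coefCM coefX.
    have -> : (j == 0%N) = false by apply/eqP; lia.
    have -> : (j == 1%N) = false by apply/eqP; lia.
    by rewrite mulr0 addr0.
  rewrite cS; lia.
have [q hq] := EH_prod _ w r.
have key : (Hp * Ev)`_r =
    \sum_(j < r.+1) (-1) ^+ j * esymf R m v (r - j) * hsymf R d w j.
  rewrite coefM; apply: eq_bigr => j _.
  rewrite hsym_coef ?esym_coef; last by rewrite -ltnS ltn_ord.
  by rewrite mulrAC.
rewrite -key hEv mulrA [Hp * Ew]mulrC hq mulrDl mul1r coefD -mulrA coefXnM ltnSn addr0.
exact: (leq_sizeP _ _ hsz).
Qed.

Lemma alt_xe_prod d (y : 'I_d -> R) x :
  \sum_(j < d.+1) (-1) ^+ j * x ^+ (d - j) * esymf R d y j = \prod_i (x - y i).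
Proof.
rewrite (eq_bigr (fun i => - y i + x)); last by move=> i _; rewrite addrC.
rewrite bigA_distr.
under eq_bigr do rewrite prod_if prodrN prodr_const.
rewrite /esymf.
rewrite (eq_bigr (fun j : 'I_d.+1 => \sum_(S : {set 'I_d})
   if #|S| == j then (-1) ^+ j * x ^+ (d - j) * \prod_(i in S) y i else 0));
  last by move=> j _; rewrite big_distrr big_mkcond.
rewrite exchange_big /=; apply: eq_bigr => S _.
have hS : (#|S| < d.+1)%N by rewrite ltnS -[X in (_ <= X)%N](card_ord d) max_card.
rewrite (bigD1 (Ordinal hS)) //= eqxx [X in _ + X]big1 ?addr0; last first.
  move=> j hj; case: (@eqP _ #|S| j) => // hSj.
  have hj' : j = Ordinal hS by apply/val_inj; rewrite /= hSj.
  by rewrite hj' eqxx in hj.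
have -> : #|~: S| = (d - #|S|)%N.
  have := cardsC S; rewrite card_ord; lia.
by rewrite mulrAC.
Qed.

End Gen.

Lemma meval_esym N m (z : 'I_N -> rat) (idx : 'I_m -> 'I_N) r :
  (esymf _ m (fun i => ('X_(idx i) : {mpoly rat[N]})) r).@[z]
    = esymf rat m (fun i => z (idx i)) r.
Proof.
rewrite /esymf rmorph_sum; apply: eq_bigr => S _.
by rewrite rmorph_prod; apply: eq_bigr => i _; exact: mevalXU.
Qed.

Lemma meval_hsym N m (z : 'I_N -> rat) (idx : 'I_m -> 'I_N) r :
  (hsymf _ m (fun i => ('X_(idx i) : {mpoly rat[N]})) r).@[z]
    = hsymf rat m (fun i => z (idx i)) r.
Proof.
rewrite /hsymf rmorph_sum; apply: eq_bigr => S _.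
by rewrite rmorph_prod; apply: eq_bigr => i _; rewrite rmorphXn; congr (_ ^+ _); exact: mevalXU.
Qed.

Lemma meval_alt_eh n d k m (idx : 'I_m -> 'I_(n + d + k)) r z :
  (alt_eh n d k m (fun i => 'X_(idx i)) r).@[z] =
  \sum_(j < r.+1) (-1) ^+ j * esymf rat m (fun i => z (idx i)) (r - j)
     * hsymf rat d (fun i => z (yidx n d k i)) j.
Proof.
rewrite /alt_eh rmorph_sum; apply: eq_bigr => j _.
rewrite !rmorphM rmorphXn rmorphN rmorph1; congr (_ * _ * _); [exact: meval_esym | exact: meval_hsym].
Qed.

Lemma meval_alt_xe n d k i z :
  (alt_xe n d k i).@[z] =
  \sum_(j < d.+1) (-1) ^+ j * z (xidx n d k i) ^+ (d - j)
     * esymf rat d (fun l => z (yidx n d k l)) j.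
Proof.
rewrite /alt_xe rmorph_sum; apply: eq_bigr => j _.
rewrite !rmorphM !rmorphXn rmorphN rmorph1; congr (_ * _ ^+ _ * _); [exact: mevalXU | exact: meval_esym].
Qed.

Theorem lemma3p15 (n k d : nat) (hd : (0 < d)%N) (hdk : (d <= k)%N) (hkn : (k <= n)%N) :
  forall p : {mpoly rat[n + d + k]},
    J_Qt n k d p -> vanishing_ideal (n + d + k) (Zset n k d) p.
Proof.
move=> p [s [Hs ->]] z [[f [injf hf]] [g [gsurj hg]]].
rewrite rmorph_sum big_seq big1 // => cg Hcg; rewrite rmorphM /=.
suff -> : (cg.2).@[z] = 0 by rewrite mulr0.
case: (Hs cg Hcg) => [[r hr ->]|[[r hr ->]|[i ->]]].
- rewrite /tv meval_alt_eh.
  apply: (@alt_vanish _ _ _ _ _ f) => // j; by rewrite hf.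
- have hex : forall j : 'I_d, exists i : 'I_n, g i == j.
    by move=> j; have [i hi] := gsurj j; exists i; apply/eqP.
  pose f' j := xchoose (hex j).
  have hf' : forall j, g (f' j) = j by move=> j; apply/eqP; exact: (xchooseP (hex j)).
  rewrite /xv meval_alt_eh.
  apply: (@alt_vanish _ _ _ _ _ f') => //.
    by move=> a b hab; rewrite -(hf' a) -(hf' b) hab.
  by move=> j; rewrite hg hf'.
- rewrite meval_alt_xe alt_xe_prod (bigD1 (g i)) //= hg subrr mul0r //.
Qed.
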